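(* Let $F$ be the $2$-dimensional cellular automaton with state set $Q_F=\{0,\leftarrow,\downarrow,\leftarrow\!\!\!\!\downarrow\}$, neighborhood $\{(0,0),(0,1),(1,0)\}$, and local rule $f(\text{center},\text{north},\text{east})$ given by $f(0,\downarrow,0)=\downarrow$, $f(0,0,\leftarrow)=\leftarrow$, $f(0,\ast,\leftarrow\!\!\!\!\downarrow)=\leftarrow$, $f(\downarrow,\ast,\leftarrow)=\leftarrow\!\!\!\!\downarrow$, and $f(a,\ast,\ast)=a$ in all other cases (where $\ast$ denotes any state, north is the cell at offset $(0,1)$ and east the cell at offset $(1,0)$). Then no $2$-dimensional freezing cellular automaton with neighborhood $\mathrm{VN}_2$ which is $1$-change can simulate $F$. Consequently, there is no $1$-change freezing cellular automaton with neighborhood $\mathrm{VN}_2$ which simulates every $2$-dimensional freezing cellular automaton with neighborhood $\mathrm{VN}_2$.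
   Context: A $d$-dimensional cellular automaton (CA) is $F=(d,Q,N,f)$ with $Q$ finite, $N\subset\mathbb{Z}^d$ finite, $f:Q^N\to Q$, global map $F(c)_z=f(c|_{z+N})$. A CA is freezing if there is a partial order $\preceq$ on $Q$ with $F(c)_z\preceq c_z$ for all $c,z$. A CA is $k$-change if in every orbit every cell changes state at most $k$ times. $\mathrm{VN}_2=\{(0,0),(\pm1,0),(0,\pm1)\}$. Simulation: $U$ simulates $G$ (same dimension $d$) if there exist $T>0$, a rectangular block $B\subseteq\mathbb{Z}^d$ with size-vector $b$, a finite $C\subset\mathbb{Z}^d$ with $\vec0\in C$, and $\phi:Q_G^C\to Q_U^B$ such that $\bar\phi(c)_{bz+r}=\phi(c|_{z+C})_r$ ($bz$ componentwise) defines an injective map $\bar\phi$ with $\bar\phi(G(c))=U^T(\bar\phi(c))$ for all $c$. *)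

(* Defs.v *)
From HB Require Import structures.
From mathcomp Require Import all_boot all_order all_algebra.
Set Implicit Arguments. Unset Strict Implicit. Unset Printing Implicit Defensive.
Import GRing.Theory Num.Theory.
Local Open Scope ring_scope.

Definition cell := (int * int)%type.
Definition cadd (z v : cell) : cell := (z.1 + v.1, z.2 + v.2).

(** A 2-dimensional cellular automaton F = (2, Q, N, f):
    state set [st] (finite), neighborhood [nb] (a finite list of vectors of Z^2,
    listed without repetition), and local rule f : Q^N -> Q, where Q^N is
    represented by finite functions indexed by positions in [nb]. *)
Record CA2 := MkCA2 {
  st : finType;
  nb : seq cell;
  nb_uniq : uniq nb;
  loc : {ffun 'I_(size nb) -> st} -> st }.

Definition config (A : CA2) := cell -> st A.

Definition glob (A : CA2) (c : config A) : config A :=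
  fun z => @loc A [ffun i : 'I_(size (@nb A)) => c (cadd z (nth (0, 0) (@nb A) i))].

Definition freezing (A : CA2) : Prop :=
  exists le : rel (st A),
    [/\ reflexive le, antisymmetric le, transitive le &
        forall (c : config A) (z : cell), le (glob c z) (c z)].

Definition k_change (k : nat) (A : CA2) : Prop :=
  forall (c : config A) (z : cell) (n : nat),
    (\sum_(t < n) (iter t.+1 (@glob A) c z != iter t (@glob A) c z) <= k)%N.

Definition VN2 : seq cell := [:: (0, 0); (1, 0); (-1, 0); (0, 1); (0, -1)].

Definition simulates (U G : CA2) : Prop :=
  exists (T b1 b2 : nat) (C : seq cell)
         (phi : {ffun 'I_(size C) -> st G} -> {ffun 'I_b1 * 'I_b2 -> st U})
         (barphi : config G -> config U),
    [/\ (0 < T)%N, (0 < b1)%N, (0 < b2)%N, uniq C & (0, 0) \in C] /\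
    [/\ (forall (c : config G) (z : cell) (r1 : 'I_b1) (r2 : 'I_b2),
           barphi c ((b1%:Z) * z.1 + (r1 : nat)%:Z, (b2%:Z) * z.2 + (r2 : nat)%:Z)
           = phi [ffun i : 'I_(size C) => c (cadd z (nth (0, 0) C i))] (r1, r2)),
        (forall c1 c2 : config G,
           (forall x, barphi c1 x = barphi c2 x) -> forall x, c1 x = c2 x) &
        (forall (c : config G) (x : cell),
           barphi (glob c) x = iter T (@glob U) (barphi c) x)].

Inductive QF := Q0 | QL | QD | QLD.

Definition QF_enc (q : QF) : 'I_4 :=
  match q with Q0 => inord 0 | QL => inord 1 | QD => inord 2 | QLD => inord 3 end.
Definition QF_dec (i : 'I_4) : QF :=
  match val i with 0 => Q0 | 1 => QL | 2 => QD | _ => QLD end.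
Lemma QF_encK : cancel QF_enc QF_dec.
Proof. by case; rewrite /QF_dec /= inordK. Qed.
HB.instance Definition _ := Finite.copy QF (can_type QF_encK).

Definition fF (c n e : QF) : QF :=
  match c, n, e with
  | Q0, QD, Q0 => QD
  | Q0, Q0, QL => QL
  | Q0, _, QLD => QL
  | QD, _, QL => QLD
  | a, _, _ => a
  end.

Definition NF : seq cell := [:: (0, 0); (0, 1); (1, 0)].
Lemma NF_uniq : uniq NF. Proof. by []. Qed.

Definition locF (v : {ffun 'I_(size NF) -> QF}) : QF :=
  fF (v (inord 0)) (v (inord 1)) (v (inord 2)).

Definition F_CA : CA2 := @MkCA2 QF NF NF_uniq locF.

(* Main.v *)
Require Import Defs.
From mathcomp Require Import all_boot all_order all_algebra.
From mathcomp Require Import zify ring.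
From Stdlib Require Import Classical.
Import GRing.Theory Num.Theory.
Set Implicit Arguments. Unset Strict Implicit.

Open Scope ring_scope.

Definition near (p q : cell) : bool := `|q.1 - p.1| + `|q.2 - p.2| <= 1.

Lemma zip_mem (h : cell) t uv : path near h t -> uv \in zip (h::t) t ->
  [/\ uv.1 \in h::t, uv.2 \in h::t & near uv.1 uv.2].
Proof.
elim: t h => [|y t IH] h //=.
case/andP=> nhy pt; rewrite in_cons => /orP [/eqP -> | H].
  by rewrite /= !in_cons !eqxx !orbT.
have [a b c] := IH y pt H.
by split=> //; rewrite in_cons; apply/orP; right.
Qed.

Lemma tele (g : cell -> bool) (x : cell) s :
  odd (count (fun uv => g uv.1 != g uv.2) (zip (x::s) s)) = (g x != g (last x s)).
Proof.
elim: s x => [|y s IH] x /=; first by case: (g x).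
rewrite oddD IH /=; case: (g x); case: (g y); case: (g (last y s)) => //.
Qed.

Definition cr (c : cell) (uv : cell * cell) : bool :=
  (uv.1.1 == uv.2.1) && (c.1 < uv.1.1) &&
  (((uv.1.2 == c.2) && (uv.2.2 == c.2 + 1)) || ((uv.2.2 == c.2) && (uv.1.2 == c.2 + 1))).

Section Cross.
Variables (s1 s2 lo hi : int) (h2 : cell) (t2 : seq cell).
Hypotheses (p2 : path near h2 t2) (hb : h2.2 < lo) (ht : hi < (last h2 t2).2)
  (hs : forall c, c \in h2 :: t2 -> s1 <= c.1 <= s2).

Definition cnt c := count (cr c) (zip (h2::t2) t2).

Lemma cnt_right (c : cell) : s2 < c.1 -> cnt c = 0%N.
Proof.
move=> H; apply/eqP; rewrite -leqn0 leqNgt -has_count; apply/hasPn => uv /(zip_mem p2) [m1 m2 _].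
have := hs m1; rewrite /cr; move: m1 m2; case: uv => [[a b] [a' b']] /= _ _.
apply: contraTN => /andP [/andP [_ h] _]; lia.
Qed.

Lemma cnt_left (c : cell) : c.1 < s1 -> lo <= c.2 <= hi -> odd (cnt c).
Proof.
move=> H1 H2; rewrite /cnt.
set g := (fun w : cell => w.2 <= c.2).
have <- : count (fun uv => g uv.1 != g uv.2) (zip (h2::t2) t2) = count (cr c) (zip (h2::t2) t2).
  apply: eq_in_count.
  2: by rewrite tele /g; apply/negP => /eqP; lia.
move=> uv /(zip_mem p2) [m1 m2 n]; have := hs m1; have := hs m2; move: n m1 m2.
rewrite /near /cr /g; case: uv => [[a b] [a' b']] /= n _ _ q1 q2.
case: (boolP (a == a')) => /= [/eqP e|ne].
  subst a'. have -> : (c.1 < a) = true by lia.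
  rewrite /=. apply/idP/idP; [|case/orP; case/andP=> /eqP-> /eqP->; lia].
  move=> hh; apply/orP; lia.
apply/negbTE; lia.
Qed.

Lemma cnt_h (c d : cell) : c.2 = d.2 -> `|c.1 - d.1| <= 1 ->
  c \notin h2 :: t2 -> d \notin h2 :: t2 -> cnt c = cnt d.
Proof.
move=> e1 e2 nc nd; apply: eq_in_count => uv /(zip_mem p2) [m1 m2 n].
have u1 : uv.1 != c by apply: contraNneq nc => <-.
have u2 : uv.1 != d by apply: contraNneq nd => <-.
have v1 : uv.2 != c by apply: contraNneq nc => <-.
have v2 : uv.2 != d by apply: contraNneq nd => <-.
move: u1 u2 v1 v2 n e1 e2; rewrite /near /cr.
case: uv {m1 m2} => [[a b] [a' b']]; case: c nc => [x y] _; case: d nd => [x' y'] _ /=.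
rewrite !xpair_eqE => u1 u2 v1 v2 n e1 e2.
apply/idP/idP => H; lia.
Qed.

Lemma cnt_v (c : cell) : (c.1, c.2 + 1) \notin h2 :: t2 -> lo <= c.2 -> c.2 + 1 <= hi ->
  odd (cnt c) = odd (cnt (c.1, c.2 + 1)).
Proof.
move=> nd l1 l2.
set g := (fun w : cell => (w.2 == c.2 + 1) && (c.1 < w.1)).
have H0 : count (predI (cr c) (cr (c.1, c.2 + 1))) (zip (h2::t2) t2) = 0%N.
  apply/eqP; rewrite -leqn0 leqNgt -has_count; apply/hasPn => uv _.
  rewrite /cr /=; case: uv => [[a b] [a' b']] /=; apply/negP => H; lia.
have H1 : count (predU (cr c) (cr (c.1, c.2 + 1))) (zip (h2::t2) t2) =
          count (fun uv => g uv.1 != g uv.2) (zip (h2::t2) t2).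
  apply: eq_in_count => uv /(zip_mem p2) [m1 m2 n].
  have u2 : uv.1 != (c.1, c.2 + 1) by apply: contraNneq nd => <-.
  have v2 : uv.2 != (c.1, c.2 + 1) by apply: contraNneq nd => <-.
  move: u2 v2 n; rewrite /near /cr /g /=.
  case: uv {m1 m2} => [[a b] [a' b']]; case: c {nd l1 l2 g H0} => [x y] /=.
  rewrite !xpair_eqE => u2 v2 n.
  apply/idP/idP => H; lia.
have := tele g h2 t2.
have -> : (g h2 != g (last h2 t2)) = false by rewrite /g; apply/negbTE; lia.
rewrite -H1 => /negbT.
have := count_predUI (cr c) (cr (c.1, c.2 + 1)) (zip (h2::t2) t2).
rewrite H0 addn0 => ->; rewrite oddD /cnt; by case: (odd _); case: (odd _).
Qed.

Lemma cnt_step (c d : cell) : near c d -> c \notin h2 :: t2 -> d \notin h2 :: t2 ->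
  lo <= c.2 <= hi -> lo <= d.2 <= hi -> odd (cnt c) = odd (cnt d).
Proof.
move=> n nc nd hc hd.
have [e|e] : c.2 = d.2 \/ c.2 <> d.2 by case: (c.2 =P d.2); [left|right].
  rewrite (cnt_h e) //; move: n; rewrite /near; case: (c) => [x y]; case: (d) => [x' y'] /=; lia.
have [e1 | e1] : d = (c.1, c.2 + 1) \/ c = (d.1, d.2 + 1).
  move: n e hc hd; rewrite /near; case: c {nc} => [x y]; case: d {nd} => [x' y'] /= n e hc hd.
  have [->|ne] := eqVneq y' (y + 1).
    left; congr pair; lia.
  right; congr pair; lia.
  have e2 := congr1 snd e1; rewrite /= in e2.
  by rewrite e1 cnt_v // -?e1 //; lia.
have e2 := congr1 snd e1; rewrite /= in e2.
by rewrite e1 -cnt_v // -?e1 //; lia.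
Qed.

Lemma crossing (h1 : cell) (t1 : seq cell) :
  path near h1 t1 -> h1.1 < s1 -> s2 < (last h1 t1).1 ->
  (forall c, c \in h1 :: t1 -> lo <= c.2 <= hi) ->
  exists c, c \in h1 :: t1 /\ c \in h2 :: t2.
Proof.
move=> p1 l1 r1 hr.
case: (boolP (has (fun c => c \in h2::t2) (h1::t1))) => [/hasP [c m1 m2]|/hasPn H].
  by exists c.
exfalso.
have : odd (cnt h1) = odd (cnt (last h1 t1)).
  clear l1 r1.
  elim: t1 h1 p1 hr H => [|y t IH] h //= /andP [nh pt] hr H.
  rewrite (cnt_step nh) ?H ?hr ?mem_head ?in_cons ?eqxx ?orbT //.
  apply: IH => //.
  - by move=> c m; apply: hr; rewrite in_cons m orbT.
  - by move=> c m; apply: H; rewrite in_cons m orbT.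
rewrite (cnt_right r1) (cnt_left l1) //; apply: hr; exact: mem_head.
Qed.
End Cross.

Open Scope ring_scope.

Section Gen.
Variable U : CA2.
Hypothesis hVN : perm_eq (nb U) VN2.

Notation it n x := (iter n (@glob U) x).

Lemma glob_ext (x y : config U) : (forall p, x p = y p) -> forall p, glob x p = glob y p.
Proof. by move=> H p; rewrite /glob; congr loc; apply/ffunP => i; rewrite !ffunE. Qed.

Lemma iter_ext n (x y : config U) : (forall p, x p = y p) -> forall p, it n x p = it n y p.
Proof. elim: n => [|n IH] // H p; rewrite !iterS; apply: glob_ext => q; exact: IH. Qed.

Lemma glob_loc (x y : config U) p :
  (forall v, v \in VN2 -> x (cadd p v) = y (cadd p v)) -> glob x p = glob y p.
Proof.
move=> H; rewrite /glob; congr loc; apply/ffunP => i; rewrite !ffunE; apply: H.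
by rewrite -(perm_mem hVN) mem_nth.
Qed.

Lemma glob_loc_neq (x y : config U) p : glob x p != glob y p ->
  exists2 v, v \in VN2 & x (cadd p v) != y (cadd p v).
Proof.
move=> H; case: (boolP (has (fun v => x (cadd p v) != y (cadd p v)) VN2)).
  by case/hasP => v m h; exists v.
move/hasPn=> h; case/negP: H; apply/eqP; apply: glob_loc => v /h; by move/negPn/eqP.
Qed.

Lemma VN2_near p v : v \in VN2 -> near p (cadd p v).
Proof.
rewrite /VN2 /near /cadd !inE; case: v => a b /=.
by rewrite !xpair_eqE => H; lia.
Qed.

Lemma diff_path t (x y : config U) p : it t x p != it t y p ->
  exists s, [/\ path near p s, x (last p s) != y (last p s) &
    forall c, c \in p :: s -> (exists i, it i x c != it i y c) /\
        `|c.1 - p.1| + `|c.2 - p.2| <= t%:Z].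
Proof.
elim: t p => [|t IH] p H.
  exists [::]; split=> // c; rewrite inE => /eqP ->; split; first by exists 0%N.
  by rewrite !subrr /=.
rewrite !iterS in H; have [v mv nv] := glob_loc_neq H.
have [s [ps ls hs]] := IH _ nv.
exists (cadd p v :: s); split.
- by rewrite /= VN2_near.
- by [].
move=> c; rewrite in_cons => /orP [/eqP ->|m].
  split; first by exists t.+1; rewrite !iterS.
  by rewrite !subrr /=.
have [h1 h2] := hs c m; split => //.
move: h2 (VN2_near p mv); rewrite /near /cadd /=.
case: c {m h1} => [c1 c2]; case: p {H nv ps ls hs} => [p1 p2]; case: v {mv} => [v1 v2] /=.
move=> h n; lia.
Qed.

Lemma change_path t (x : config U) p : it t.+1 x p != it t x p ->
  exists s, [/\ path near p s, it 1 x (last p s) != x (last p s) &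
    forall c, c \in p :: s -> exists2 j, (j <= t)%N & it j.+1 x c != it j x c].
Proof.
elim: t p => [|t IH] p H.
  exists [::]; split=> // c; rewrite inE => /eqP ->; by exists 0%N.
rewrite !iterS in H; have [v mv nv] := glob_loc_neq H.
have [s [ps ls hs]] := IH _ nv.
exists (cadd p v :: s); split.
- by rewrite /= VN2_near.
- by [].
move=> c; rewrite in_cons => /orP [/eqP ->|m].
  by exists t.+1; rewrite ?iterS.
have [j lj hj] := hs c m; exists j => //; exact: leqW.
Qed.

Lemma step_exists (x : config U) p n m : (n <= m)%N -> it m x p != it n x p ->
  exists j, [/\ (n <= j)%N, (j < m)%N & it j.+1 x p != it j x p].
Proof.
elim: m => [|m IH]; first by rewrite leqn0 => /eqP ->; rewrite eqxx.
rewrite leq_eqVlt => /orP [/eqP -> | lt]; first by rewrite eqxx.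
case: (eqVneq (it m.+1 x p) (it m x p)) => [e | ne].
  rewrite e => /(IH lt) [j [a b c]]; exists j; split=> //; exact: ltnW.
by move=> _; exists m.
Qed.

Hypothesis h1 : k_change 1 U.

Lemma two_changes (x : config U) p i j :
  it i.+1 x p != it i x p -> it j.+1 x p != it j x p -> i = j.
Proof.
move=> hi hj; case: (eqVneq i j) => // nij; exfalso.
have := h1 x p (maxn i j).+1.
have li : (i < (maxn i j).+1)%N by rewrite ltnS leq_maxl.
have lj : (j < (maxn i j).+1)%N by rewrite ltnS leq_maxr.
rewrite (bigD1 (Ordinal li)) // (bigD1 (Ordinal lj)) /=; last first.
  by rewrite -(inj_eq val_inj) /= eq_sym nij.
by rewrite hi hj.
Qed.

Lemma frozen_after (x : config U) p i m : it i.+1 x p != it i x p -> (i < m)%N ->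
  it m x p = it i.+1 x p.
Proof.
move=> hi lm; case: (eqVneq (it m x p) (it i.+1 x p)) => // ne; exfalso.
have [j [a b c]] := step_exists lm ne.
by have := two_changes hi c => e; move: a; rewrite e ltnn.
Qed.

Lemma frozen_before (x : config U) p i m : it i.+1 x p != it i x p -> (m <= i)%N ->
  it m x p = x p.
Proof.
move=> hi lm; case: (eqVneq (it m x p) (x p)) => // ne; exfalso.
have [j [a b c]] := step_exists (leq0n m) ne.
by have := two_changes hi c => e; move: b; rewrite -e ltnNge lm.
Qed.

Lemma frozen (x : config U) p n m : it n x p != x p -> (n <= m)%N -> it m x p = it n x p.
Proof.
move=> ne lm; have [j [_ b c]] := step_exists (leq0n n) ne.
by rewrite (frozen_after c) ?(frozen_after c b) // (leq_trans b lm).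
Qed.

Hypothesis hfr : freezing U.

Lemma fixed_pt T (x : config U) : (0 < T)%N -> (forall p, it T x p = x p) -> forall p, glob x p = x p.
Proof.
case: hfr => le [rf an tr dec] T0 H p.
have mono : forall k m, (k <= m)%N -> le (it m x p) (it k x p).
  move=> k m; elim: m => [|m IH]; first by rewrite leqn0 => /eqP ->; exact: rf.
  rewrite leq_eqVlt => /orP [/eqP -> | lt]; first exact: rf.
  apply: tr (IH lt); rewrite iterS; exact: dec.
apply: an; rewrite dec /=.
by rewrite -{1}(H p); apply: (mono 1%N T).
Qed.
End Gen.

Open Scope ring_scope.

Lemma globF (c : config F_CA) z : glob c z = fF (c z) (c (cadd z (0,1))) (c (cadd z (1,0))).
Proof. rewrite /glob /= /locF !ffunE /= !inordK //. rewrite /cadd /= !addr0. by case: z. Qed.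

Definition S (K Y0 : int) (wl : bool) (t : nat) : config F_CA :=
 fun z => 
  if z.1 == 0 then
    if z.2 == 0 then (if wl && (K <= t%:Z) then QLD else if Y0 <= t%:Z then QD else Q0)
    else (if Y0 - t%:Z <= z.2 then QD else Q0)
  else if z.2 == 0 then (if wl && (K - t%:Z <= z.1) && (z.1 <= K) then QL else Q0)
  else Q0.

Lemma S_step K Y0 wl t z : 1 <= K -> Y0 + 1 <= K ->
  glob (S K Y0 wl t) z = S K Y0 wl t.+1 z.
Proof.
move=> h1 h2; rewrite globF /S /cadd; case: z => x y /=.
case: wl => /=; repeat (case: ifP => ?); (by []) || lia.
Qed.

Lemma S_iter K Y0 wl t n z : 1 <= K -> Y0 + 1 <= K ->
  iter n (@glob F_CA) (S K Y0 wl t) z = S K Y0 wl (n + t) z.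
Proof.
move=> h1 h2; elim: n z => [|n IH] z //.
rewrite iterS -S_step //; apply: glob_ext => q; exact: IH.
Qed.

Lemma S_diff_t K Y0 wl t t' z : S K Y0 wl t z != S K Y0 wl t' z ->
  z.1 = 0 \/ (z.2 = 0 /\ K - t%:Z - t'%:Z <= z.1).
Proof.
rewrite /S; case: z => x y /=.
case: wl => /=; repeat (case: ifP => ?); move=> H; first [by rewrite eqxx in H | lia].
Qed.

Lemma S_AB K Y0 t z : S K Y0 true t z != S K Y0 false t z ->
  z.2 = 0 /\ (K - t%:Z <= z.1 \/ K <= t%:Z).
Proof.
rewrite /S; case: z => x y /=.
repeat (case: ifP => ?); move=> H; first [by rewrite eqxx in H | lia].
Qed.

Lemma S_0 K Y0 wl z : 0 < Y0 -> 0 < K -> S K Y0 wl 0 z != Q0 ->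
  (z.1 = 0 /\ Y0 <= z.2) \/ (z.2 = 0 /\ z.1 = K).
Proof.
move=> hY hK; rewrite /S; case: z => x y /=.
case: wl => /=; repeat (case: ifP => ?); move=> H; first [by rewrite eqxx in H | lia].
Qed.

Open Scope ring_scope.

Lemma C_bound (C : seq cell) : exists Rn : nat,
  forall v : cell, v \in C -> `|v.1| <= Rn%:Z /\ `|v.2| <= Rn%:Z.
Proof.
elim: C => [|v C [Rn IH]]; first by exists 0%N.
exists (maxn Rn (absz v.1 + absz v.2)) => u; rewrite in_cons => /orP [/eqP ->|m].
  case: (v) => a b /=; split; lia.
have := IH u m; case: (u) => a b /=; lia.
Qed.

Section Sim.
Variable U : CA2.
Hypotheses (hVN : perm_eq (nb U) VN2) (hfr : freezing U) (h1 : k_change 1 U).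
Variables (T b1 b2 : nat) (C : seq cell)
  (phi : {ffun 'I_(size C) -> st F_CA} -> {ffun 'I_b1 * 'I_b2 -> st U})
  (barphi : config F_CA -> config U).
Hypotheses (T0 : (0 < T)%N) (b10 : (0 < b1)%N) (b20 : (0 < b2)%N).
Hypothesis hbar : forall (c : config F_CA) (z : cell) (r1 : 'I_b1) (r2 : 'I_b2),
           barphi c ((b1%:Z) * z.1 + (r1 : nat)%:Z, (b2%:Z) * z.2 + (r2 : nat)%:Z)
           = phi [ffun i : 'I_(size C) => c (cadd z (nth (0, 0) C i))] (r1, r2).
Hypothesis hinj : forall c1 c2 : config F_CA,
           (forall x, barphi c1 x = barphi c2 x) -> forall x, c1 x = c2 x.
Hypothesis hcom : forall (c : config F_CA) (x : cell),
           barphi (glob c) x = iter T (@glob U) (barphi c) x.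

Notation it n x := (iter n (@glob U) x).

Definition cellOf (z : cell) (r1 : 'I_b1) (r2 : 'I_b2) : cell :=
  ((b1%:Z) * z.1 + (r1 : nat)%:Z, (b2%:Z) * z.2 + (r2 : nat)%:Z).

Lemma decomp (p : cell) : exists z (r1 : 'I_b1) (r2 : 'I_b2), p = cellOf z r1 r2.
Proof.
have o1 : (absz (p.1 %% b1)%Z < b1)%N.
  have := @ltz_pmod p.1 b1%:Z; have := @modz_ge0 p.1 b1%:Z; lia.
have o2 : (absz (p.2 %% b2)%Z < b2)%N.
  have := @ltz_pmod p.2 b2%:Z; have := @modz_ge0 p.2 b2%:Z; lia.
exists ((p.1 %/ b1)%Z, (p.2 %/ b2)%Z), (Ordinal o1), (Ordinal o2).
rewrite /cellOf /=; case: p o1 o2 => x y /= o1 o2.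
have := divz_eq x b1%:Z; have := divz_eq y b2%:Z.
have := @modz_ge0 x b1%:Z; have := @modz_ge0 y b2%:Z.
move=> a b c d; congr pair; lia.
Qed.

Lemma cellOf_b (z : cell) r1 r2 : let p := cellOf z r1 r2 in
  [/\ b1%:Z * z.1 <= p.1, p.1 <= b1%:Z * z.1 + b1%:Z - 1,
      b2%:Z * z.2 <= p.2 & p.2 <= b2%:Z * z.2 + b2%:Z - 1].
Proof. rewrite /cellOf /=; case: r1 r2 => [r1 h1'] [r2 h2'] /=; split; lia. Qed.

Lemma blk_near z r1 r2 z' r1' r2' : near (cellOf z r1 r2) (cellOf z' r1' r2') ->
  `|z.1 - z'.1| <= 1 /\ `|z.2 - z'.2| <= 1.
Proof.
rewrite /near /cellOf /=; case: r1 r2 r1' r2' => [r1 h1'] [r2 h2'] [r1' h1''] [r2' h2''] /=.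
case: z z' => [x y] [x' y'] /= n; split; nia.
Qed.

Definition win (c : config F_CA) (z : cell) := [ffun i : 'I_(size C) => c (cadd z (nth (0, 0) C i))].

Lemma barphi_ext (c1 c2 : config F_CA) : (forall q, c1 q = c2 q) -> forall p, barphi c1 p = barphi c2 p.
Proof.
move=> H p; have [z [r1 [r2 ->]]] := decomp p; rewrite /cellOf !hbar; congr (phi _ _).
by apply/ffunP => i; rewrite !ffunE.
Qed.

Lemma barphi_win (c1 c2 : config F_CA) z r1 r2 :
  (forall v, v \in C -> c1 (cadd z v) = c2 (cadd z v)) ->
  barphi c1 (cellOf z r1 r2) = barphi c2 (cellOf z r1 r2).
Proof.
move=> H; rewrite /cellOf !hbar; congr (phi _ _).
by apply/ffunP => i; rewrite !ffunE; apply: H; apply: mem_nth.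
Qed.

Lemma barphi_win2 (c1 c2 : config F_CA) z z' r1 r2 :
  (forall v, v \in C -> c1 (cadd z v) = c2 (cadd z' v)) ->
  barphi c1 (cellOf z r1 r2) = barphi c2 (cellOf z' r1 r2).
Proof.
move=> H; rewrite /cellOf !hbar; congr (phi _ _).
by apply/ffunP => i; rewrite !ffunE; apply: H; apply: mem_nth.
Qed.

Lemma barphi_neq (c1 c2 : config F_CA) z r1 r2 :
  barphi c1 (cellOf z r1 r2) != barphi c2 (cellOf z r1 r2) ->
  exists2 v, v \in C & c1 (cadd z v) != c2 (cadd z v).
Proof.
move=> H; case: (boolP (has (fun v => c1 (cadd z v) != c2 (cadd z v)) C)).
  by case/hasP => v m h; exists v.
move/hasPn=> h; case/negP: H; apply/eqP; apply: barphi_win => v /h; by move/negPn/eqP.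
Qed.

Lemma com_iter n (c : config F_CA) p : barphi (iter n (@glob F_CA) c) p = it (n * T) (barphi c) p.
Proof.
elim: n p => [|n IH] p; first by [].
rewrite iterS hcom mulSn iterD; apply: iter_ext => q; exact: IH.
Qed.

Lemma inj_neq (c1 c2 : config F_CA) z : c1 z != c2 z -> exists p, barphi c1 p != barphi c2 p.
Proof.
move=> H; apply: NNPP => N; case/negP: H; apply/eqP; apply: hinj => p.
apply/eqP; apply: NNPP => H; apply: N; exists p; exact/negP.
Qed.


Lemma cellOf_inj z r1 r2 z' r1' r2' : cellOf z r1 r2 = cellOf z' r1' r2' -> z = z'.
Proof.
rewrite /cellOf; case: r1 r2 r1' r2' => [r1 h1'] [r2 h2'] [r1' h1''] [r2' h2''] /=.
case: z z' => [x y] [x' y'] /= [e1 e2]; congr pair; nia.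
Qed.

Lemma strip_path (P Q : cell -> Prop) h s : path near h s ->
  (forall c, c \in h :: s -> P c \/ Q c) -> P h ->
  (forall c d, near c d -> P c -> Q d -> False) -> forall c, c \in h :: s -> P c.
Proof.
elim: s h => [|y s IH] h /=.
  by move=> _ _ Ph _ c; rewrite inE => /eqP ->.
case/andP=> nh ps H Ph sep c; rewrite in_cons => /orP [/eqP -> //|m].
apply: (IH y) => //.
- by move=> d md; apply: H; rewrite in_cons md orbT.
- have my : y \in h :: y :: s by rewrite !in_cons eqxx orbT.
  case: (H y my) => [//|Qy].
  by case: (sep _ _ nh Ph Qy).
Qed.

Definition cstar : config F_CA := fun z => if z.1 == 0 then QD else Q0.
Definition Linf : config F_CA := fun z => if z.2 == 0 then QL else Q0.
Definition zero : config F_CA := fun _ => Q0.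

Definition PP (Rn : nat) (c : cell) := forall z r1 r2, c = cellOf z r1 r2 -> `|z.1| <= Rn%:Z.
Definition QQ (m : int) (c : cell) := forall z r1 r2, c = cellOf z r1 r2 -> m <= z.1.

Lemma no_sim : False.
Proof.
have [Rn HR] := C_bound C.
move eX : (2*Rn+2)%N => Xn.
move eL : ((Xn+Xn)*T)%N => Ln.
move eY : (2*Rn+2+Ln)%N => Y0n.
move eN : (4*Rn+3+2*Ln)%N => Nn.
move eM : (Nn + Xn + Xn)%N => Mn.
have eML : (Mn * T = Nn * T + Ln)%N by rewrite -eM -eL -addnA mulnDl.
move eK : (Xn + Nn)%:Z => K.
move eYz : Y0n%:Z => Y0.
move eyb : (- (Rn + 1 + Ln)%:Z) => yb.
have hK1 : 1 <= K by lia.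
have hK2 : Y0 + 1 <= K by lia.
pose SA := S K Y0 true; pose SB := S K Y0 false.
pose x0 := barphi (SA 0%N); pose y0 := barphi (SB 0%N).
have itA : forall n p, it (n * T) x0 p = barphi (SA n) p.
  move=> n p; rewrite -com_iter; apply: barphi_ext => q; by rewrite S_iter // addn0.
have itB : forall n p, it (n * T) y0 p = barphi (SB n) p.
  move=> n p; rewrite -com_iter; apply: barphi_ext => q; by rewrite S_iter // addn0.
have nz : cstar (0,0) != zero (0,0) by apply/eqP; rewrite /cstar /zero /=; discriminate.
have [p Hp] := @inj_neq cstar zero (0,0) nz.
have [[xd yd] [rd1 [rd2 ep]]] := decomp p; subst p.
have [v vC hv] := barphi_neq Hp.
have hxd : `|xd| <= Rn%:Z.
  move: hv; rewrite /cstar /zero /cadd /=; have := HR v vC.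
  case: v {vC} => a c /=; case: ifP => [/eqP ? ? _ | _ _]; [lia | by rewrite eqxx].
pose pb := cellOf (xd, yb) rd1 rd2.
have hpb : barphi cstar pb != barphi zero pb.
  have e1 : barphi cstar pb = barphi cstar (cellOf (xd, yd) rd1 rd2).
    by apply: barphi_win2 => w _; rewrite /cstar /cadd.
  have e2 : barphi zero pb = barphi zero (cellOf (xd, yd) rd1 rd2).
    by apply: barphi_win2 => w _; rewrite /zero /cadd.
  by rewrite e1 e2.
have e0 : barphi (SA 0%N) pb = barphi zero pb.
  apply: barphi_win => w wC; have := HR w wC; rewrite /SA /S /zero /cadd /=.
  case: w {wC} => a c /= hb; repeat (case: ifP => ?); first [done | lia].
have eNp : barphi (SA Nn) pb = barphi cstar pb.
  apply: barphi_win => w wC; have := HR w wC; rewrite /SA /S /cstar /cadd /=.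
  case: w {wC} => a c /= hb; repeat (case: ifP => ?); first [done | lia].
have hch : it (Nn * T) x0 pb != x0 pb by rewrite itA eNp /x0 e0.
have [j [_ jlt jch]] := step_exists (leq0n (Nn * T)) hch.
have [s2 [ps2 ls2 hs2]] := change_path hVN jch.
have frz : forall c, c \in pb :: s2 -> it (Nn * T) x0 c != x0 c.
  move=> c m; have [j' lj' hj'] := hs2 c m.
  have l2 : (j' < Nn * T)%N by exact: (leq_ltn_trans lj' jlt).
  have := frozen_after h1 hj' l2; have := frozen_before h1 hj' (leqnn j').
  by move=> e1 ->; rewrite -e1.
pose P := PP Rn.
pose Q := QQ (Xn%:Z - Rn%:Z).
have good : forall c, c \in pb :: s2 -> P c \/ Q c.
  move=> c m; have [z [r1 [r2 ec]]] := decomp c.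
  have hn : barphi (SA Nn) c != barphi (SA 0%N) c by rewrite -itA; exact: frz.
  rewrite ec in hn; have [w wC hw] := barphi_neq hn; have := S_diff_t hw; have := HR w wC.
  case: w {wC hw} => a c' /= hb [e|[e1 e2]]; [left|right] => z' r1' r2' e';
    have ez := cellOf_inj (etrans (esym ec) e'); subst z'.
    by move: e hb; case: (z) => [zx zy] /=; clear; lia.
  by move: e1 e2 hb eK eN eX; case: (z) => [zx zy] /=; clear; lia.
have Ppb : P pb by move=> z r1 r2 e; rewrite -(cellOf_inj e) /=.
have sep : forall c d, near c d -> P c -> Q d -> False.
  move=> c d n Pc Qd; have [z [r1 [r2 ec]]] := decomp c; have [z' [r1' [r2' ed]]] := decomp d.
  have := Pc _ _ _ ec; have := Qd _ _ _ ed; rewrite ec ed in n; have := blk_near n.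
  move: eX; case: (z) => [zx zy]; case: (z') => [zx' zy'] /=; clear; lia.
have strip := strip_path ps2 good Ppb sep.
have stripb : forall c, c \in pb :: s2 -> - (Rn%:Z * b1%:Z) <= c.1 <= Rn%:Z * b1%:Z + b1%:Z - 1.
  move=> c m; have [z [r1 [r2 ec]]] := decomp c; have := strip c m _ _ _ ec.
  have := cellOf_b z r1 r2; rewrite -ec /=; case: (z) => [zx zy] /= [a b _ _] hz.
  move: a b hz; clear => a b hz.
  have [l1 l2] : - Rn%:Z <= zx /\ zx <= Rn%:Z by lia.
  have m1 : b1%:Z * (Rn%:Z - zx) >= 0 by apply: mulr_ge0; lia.
  have m2 : b1%:Z * (Rn%:Z + zx) >= 0 by apply: mulr_ge0; lia.
  have e1 : b1%:Z * (Rn%:Z - zx) = Rn%:Z * b1%:Z - b1%:Z * zx by ring.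
  have e2 : b1%:Z * (Rn%:Z + zx) = Rn%:Z * b1%:Z + b1%:Z * zx by ring.
  lia.
have bz_fix : forall q, glob (barphi zero) q = barphi zero q.
  apply: (fixed_pt hfr T0) => q; rewrite -hcom; apply: barphi_ext => q'; by rewrite globF.
pose pl := last pb s2.
have mpl : pl \in pb :: s2 by rewrite mem_last.
have [v1 v1V hv1] : exists2 v, v \in VN2 & x0 (cadd pl v) != barphi zero (cadd pl v).
  case: (boolP (has (fun v => x0 (cadd pl v) != barphi zero (cadd pl v)) VN2)).
    by case/hasP => u m h; exists u.
  move/hasPn => H; case/negP: ls2.
  have e : forall u, u \in VN2 -> x0 (cadd pl u) = barphi zero (cadd pl u).
    by move=> u /H /negPn /eqP.
  have e00 := e (0,0) isT; rewrite /cadd /= !addr0 -surjective_pairing in e00.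
  by rewrite /= (glob_loc hVN e) bz_fix e00.
have plrow : b2%:Z * (Y0 - Rn%:Z - 1) <= pl.2.
  have [zq [q1 [q2 eq]]] := decomp (cadd pl v1).
  rewrite eq in hv1; have [w wC hw] := barphi_neq hv1.
  have Y0p : 0 < Y0 by move: eYz eY; clear; lia.
  have Kp : 0 < K by move: hK1; clear; lia.
  have hS := @S_0 K Y0 true (cadd zq w) Y0p Kp hw.
  have [zl [l1' [l2' el]]] := decomp pl.
  have nn := VN2_near hVN pl v1V; rewrite eq el in nn; have [bn1 bn2] := blk_near nn.
  have Pl := strip pl mpl _ _ _ el.
  have := cellOf_b zl l1' l2'; rewrite -el => -[_ _ a _].
  have := HR w wC; move: hS bn1 bn2 Pl a; rewrite /cadd.
  case: (zq) => [zx zy]; case: (zl) => [lx ly]; case: (w) => [wa wb] /=.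
  move: eK eX eN; clear => eK eX eN hS bn1 bn2 Pl a hb.
  have hy : Y0 - Rn%:Z - 1 <= ly by lia.
  have : b2%:Z * (ly - (Y0 - Rn%:Z - 1)) >= 0 by apply: mulr_ge0; lia.
  have : b2%:Z * (ly - (Y0 - Rn%:Z - 1)) = b2%:Z * ly - b2%:Z * (Y0 - Rn%:Z - 1) by ring.
  lia.
have nzL : Linf (0,0) != zero (0,0) by apply/eqP; rewrite /Linf /zero /=; discriminate.
have [p' Hp'] := @inj_neq Linf zero (0,0) nzL.
have [[xq' yq] [rq1 [rq2 ep']]] := decomp p'; subst p'.
have [v' vC' hv'] := barphi_neq Hp'.
have hyq : `|yq| <= Rn%:Z.
  move: hv'; rewrite /Linf /zero /cadd /=; have := HR v' vC'.
  case: v' {vC'} => a c /=; case: ifP => [/eqP e1 hb _ | _ _]; [by move: e1 hb; clear; lia | by rewrite eqxx].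
pose qw := cellOf (- (Rn%:Z + 1), yq) rq1 rq2.
have hqw : barphi Linf qw != barphi zero qw.
  have e1 : barphi Linf qw = barphi Linf (cellOf (xq', yq) rq1 rq2).
    by apply: barphi_win2 => w _; rewrite /Linf /cadd.
  have e2 : barphi zero qw = barphi zero (cellOf (xq', yq) rq1 rq2).
    by apply: barphi_win2 => w _; rewrite /zero /cadd.
  by rewrite e1 e2.
have eA : barphi (SA Mn) qw = barphi Linf qw.
  apply: barphi_win => w wC; have := HR w wC; rewrite /SA /S /Linf /cadd /=.
  move: eK eX eN eM hyq; case: w {wC} => a c /=; clear => eK eX eN eM hyq hb.
  repeat (case: ifP => ?); first [done | lia].
have eB : barphi (SB Mn) qw = barphi zero qw.
  apply: barphi_win => w wC; have := HR w wC; rewrite /SB /S /zero /cadd /=.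
  move: eK eX eN eM hyq; case: w {wC} => a c /=; clear => eK eX eN eM hyq hb.
  repeat (case: ifP => ?); first [done | lia].
have hdiff : it Ln (it (Nn * T) x0) qw != it Ln (it (Nn * T) y0) qw.
  by rewrite -!iterD addnC -eML itA itB eA eB.
have [s1 [ps1 ls1 hs1]] := diff_path hVN hdiff.
pose e := last qw s1.
have erow : b1%:Z * (Xn%:Z - Rn%:Z) <= e.1.
  have [ze [e1' [e2' ee]]] := decomp e.
  have : barphi (SA Nn) e != barphi (SB Nn) e by rewrite -itA -itB.
  rewrite ee => /barphi_neq [w wC hw]; have [_ hS] := S_AB hw.
  have := cellOf_b ze e1' e2'; rewrite -ee => -[a _ _ _].
  have := HR w wC; move: hS a; rewrite /cadd.
  move: eK eX eN; case: (ze) => [zx zy]; case: (w) => [wa wb] /=; clear => eK eX eN hS a hb.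
  have hx : Xn%:Z - Rn%:Z <= zx by lia.
  have : b1%:Z * (zx - (Xn%:Z - Rn%:Z)) >= 0 by apply: mulr_ge0; lia.
  have : b1%:Z * (zx - (Xn%:Z - Rn%:Z)) = b1%:Z * zx - b1%:Z * (Xn%:Z - Rn%:Z) by ring.
  lia.
have eXz : Xn%:Z = 2 * Rn%:Z + 2 by move: eX; clear; lia.
have eybz : yb = - (Rn%:Z + 1 + Ln%:Z) by move: eyb; clear; lia.
have eYzz : Y0 = 2 * Rn%:Z + 2 + Ln%:Z by move: eY eYz; clear; lia.
have qwb := cellOf_b (- (Rn%:Z + 1), yq) rq1 rq2; rewrite -/qw /= in qwb.
have pbb := cellOf_b (xd, yb) rd1 rd2; rewrite -/pb /= in pbb.
have hbot : pb.2 < qw.2 - Ln%:Z.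
  case: qwb => _ _ a _; case: pbb => _ _ _ b.
  move: a b eybz hyq b20; rewrite /pb /qw /cellOf /=; clear => a b eybz hyq b20.
  have m1 : 0 <= b2%:Z * (yq - yb - 1 - Ln%:Z) by apply: mulr_ge0; lia.
  have m2 : 0 <= (b2%:Z - 1) * Ln%:Z by apply: mulr_ge0; lia.
  have : b2%:Z * (yq - yb - 1 - Ln%:Z) + (b2%:Z - 1) * Ln%:Z
       = b2%:Z * yq - (b2%:Z * yb + b2%:Z - 1) - Ln%:Z - 1 by ring.
  lia.
have htop : qw.2 + Ln%:Z < pl.2.
  case: qwb => _ _ _ a.
  move: a plrow eYzz hyq b20; rewrite /qw /cellOf /=; clear => a plrow eYzz hyq b20.
  have m1 : 0 <= b2%:Z * (Y0 - Rn%:Z - 2 - yq - Ln%:Z) by apply: mulr_ge0; lia.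
  have m2 : 0 <= (b2%:Z - 1) * Ln%:Z by apply: mulr_ge0; lia.
  have : b2%:Z * (Y0 - Rn%:Z - 2 - yq - Ln%:Z) + (b2%:Z - 1) * Ln%:Z
       = b2%:Z * (Y0 - Rn%:Z - 1) - (b2%:Z * yq + b2%:Z - 1) - Ln%:Z - 1 by ring.
  lia.
have hleft : qw.1 < - (Rn%:Z * b1%:Z).
  case: qwb => _ a _ _.
  have : b1%:Z * - (Rn%:Z + 1) + b1%:Z - 1 = - (Rn%:Z * b1%:Z) - 1 by ring.
  move: a; rewrite /qw /cellOf /=; clear; lia.
have hright : Rn%:Z * b1%:Z + b1%:Z - 1 < e.1.
  have : b1%:Z * (Xn%:Z - Rn%:Z) = Rn%:Z * b1%:Z + 2 * b1%:Z by rewrite eXz; ring.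
  move: erow; clear; lia.
have hrows : forall c, c \in qw :: s1 -> qw.2 - Ln%:Z <= c.2 <= qw.2 + Ln%:Z.
  move=> c m; have [_ d] := hs1 c m; move: d; case: (c) => [cx cy]; case: (qw) => [qx qy] /=; clear; lia.
have [c [m1 m2]] := crossing ps2 hbot htop stripb ps1 hleft hright hrows.
have [[i hi'] _] := hs1 c m1.
have fz := frz c m2.
have [zc [c1 [c2 ec]]] := decomp c.
have Pc := strip c m2 _ _ _ ec.
have ex0 : y0 c = x0 c.
  rewrite /y0 /x0 ec; apply: barphi_win => w wC.
  case: (eqVneq (SA 0%N (cadd zc w)) (SB 0%N (cadd zc w))) => // h.
  have [_ hS] := S_AB h; have := HR w wC; move: hS Pc eK eX eN; rewrite /cadd.
  case: (zc) => [zx zy]; case: (w) => [wa wb] /=; clear; lia.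
have exN : it (Nn * T) y0 c = it (Nn * T) x0 c.
  rewrite itA itB ec; apply: barphi_win => w wC.
  case: (eqVneq (SA Nn (cadd zc w)) (SB Nn (cadd zc w))) => // h.
  have [_ hS] := S_AB h; have := HR w wC; move: hS Pc eK eX eN; rewrite /cadd.
  case: (zc) => [zx zy]; case: (w) => [wa wb] /=; clear; lia.
have fzy : it (Nn * T) y0 c != y0 c by rewrite exN ex0.
move: hi'; rewrite -!iterD (frozen h1 fz) ?leq_addl // (frozen h1 fzy) ?leq_addl //.
by rewrite exN eqxx.
Qed.
End Sim.

Close Scope ring_scope.

Lemma VN2_uniq : uniq VN2. Proof. by []. Qed.

Definition qle (a b : QF) : bool :=
  match a, b with
  | _, Q0 => true | QLD, QD => true | QL, QL => true | QD, QD => true | QLD, QLD => true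
  | _, _ => false end.

Definition locG (v : {ffun 'I_(size VN2) -> QF}) : QF :=
  fF (v (inord 0)) (v (inord 3)) (v (inord 1)).

Definition Gp : CA2 := @MkCA2 QF VN2 VN2_uniq locG.

Lemma globG (c : config Gp) z :
  glob c z = fF (c z) (c (cadd z (0,1)%R)) (c (cadd z (1,0)%R)).
Proof. rewrite /glob /= /locG !ffunE /= !inordK //. rewrite /cadd /= !GRing.addr0. by case: z. Qed.

Lemma frG : freezing Gp.
Proof.
exists qle; split.
- by case.
- by move=> a b; case: a; case: b.
- by move=> a b c; case: a; case: b; case: c.
- move=> c z; rewrite globG.
  by case: (c z); case: (c (cadd z (0,1)%R)); case: (c (cadd z (1,0)%R)).
Qed.

Theorem theorem10 :
  (forall U : CA2, perm_eq (nb U) VN2 -> freezing U -> k_change 1 U ->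
     ~ simulates U F_CA) /\
  ~ (exists U : CA2, [/\ perm_eq (nb U) VN2, freezing U, k_change 1 U &
       forall G : CA2, perm_eq (nb G) VN2 -> freezing G -> simulates U G]).
Proof.
split.
  move=> U hp hf hk [T [b1 [b2 [C [phi [barphi [[T0 b10 b20 _ _] [hb hi hc]]]]]]]].
  exact: (no_sim hp hf hk T0 b10 b20 hb hi hc).
case=> U [hp hf hk hall].
have [T [b1 [b2 [C [phi [barphi [[T0 b10 b20 _ _] [hb hi hc]]]]]]]] := hall Gp (perm_refl _) frG.
apply: (no_sim hp hf hk T0 b10 b20 hb hi) => c x.
have e : barphi (glob (A:=F_CA) c) x = barphi (glob (A:=Gp) c) x.
  by apply: (barphi_ext hp T0 b10 b20 hb) => q; rewrite globF globG.
by rewrite e hc.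
Qed.
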